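(* Let $d\ge 1$ and let $G$ be an undirected graph. (i) If $C$ is a clique of $G$ with at least $2d+1$ vertices, then $C$ is monochromatic. (ii) If $X$ and $Y$ are monochromatic sets with $X\cap Y\neq\emptyset$, then $X\cup Y$ is monochromatic. (iii) If a vertex $u$ has more than $d$ neighbors in a monochromatic set $X$, then $X\cup\{u\}$ is monochromatic. (iv) If $T\subseteq V(G)$ is such that more than $2d$ vertices of $V(G)\setminus T$ have neighborhoods containing $T$, then $T$ is monochromatic.
   Context: All graphs are finite, simple and undirected. A cut of $G$ is a partition $(A,B)$ of $V(G)$ into two nonempty sets. A cut $(A,B)$ is a $d$-cut if every vertex of $A$ has at most $d$ neighbors in $B$ and every vertex of $B$ has at most $d$ neighbors in $A$. A set $T\subseteq V(G)$ is monochromatic if for every $d$-cut $(A,B)$ of $G$, either $T\subseteq A$ or $T\subseteq B$. *)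

(* Defs.v *)
From mathcomp Require Import all_boot.
Set Implicit Arguments. Unset Strict Implicit. Unset Printing Implicit Defensive.

Definition simple_graph (V : finType) (e : rel V) : Prop :=
  symmetric e /\ irreflexive e.

Definition nbrs_in (V : finType) (e : rel V) (x : V) (S : {set V}) : {set V} :=
  [set y in S | e x y].

Definition is_cut (V : finType) (A B : {set V}) : Prop :=
  A != set0 /\ B != set0 /\ A :&: B = set0 /\ A :|: B = setT.

Definition is_dcut (V : finType) (e : rel V) (d : nat) (A B : {set V}) : Prop :=
  is_cut A B /\
  (forall x, x \in A -> #|nbrs_in e x B| <= d) /\
  (forall x, x \in B -> #|nbrs_in e x A| <= d).

Definition monochromatic (V : finType) (e : rel V) (d : nat) (T : {set V}) : Prop :=
  forall A B : {set V}, is_dcut e d A B -> T \subset A \/ T \subset B.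

Definition is_clique (V : finType) (e : rel V) (C : {set V}) : Prop :=
  forall x y, x \in C -> y \in C -> x != y -> e x y.

Definition nbhd (V : finType) (e : rel V) (x : V) : {set V} := [set y | e x y].

(* Main.v *)
Require Import Defs.
From mathcomp Require Import all_boot.
From mathcomp Require Import zify.

Lemma cutC (V : finType) (A B : {set V}) : is_cut A B -> B = ~: A.
Proof.
case=> _ [_ [hI hU]]; apply/setP=> x; rewrite in_setC.
case hA: (x \in A); case hB: (x \in B) => //.
- have: x \in A :&: B by rewrite inE hA hB.
  by rewrite hI inE.
- have: x \in A :|: B by rewrite hU inE.
  by rewrite inE hA hB.
Qed.

Lemma split_bad (V : finType) (e : rel V) (d : nat) (A B S : {set V}) a b :
  is_dcut e d A B -> 2 * d < #|S| -> a \in A -> b \in B ->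
  (forall y, y \in S -> y \in B -> e a y) ->
  (forall y, y \in S -> y \in A -> e b y) -> False.
Proof.
move=> [hc [hA hB]] hS ha hb eA eB.
have hBC := @cutC _ _ _ hc.
have h1 : #|S :&: B| <= d.
  apply: leq_trans (hA a ha); apply: subset_leq_card; apply/subsetP=> y.
  rewrite !inE => /andP[yS yB]; by rewrite yB eA.
have h2 : #|S :&: A| <= d.
  apply: leq_trans (hB b hb); apply: subset_leq_card; apply/subsetP=> y.
  rewrite !inE => /andP[yS yA]; by rewrite yA eB.
have := cardsID A S.
have -> : S :\: A = S :&: B by rewrite hBC setDE.
move=> hsum; move: hS; rewrite -hsum; lia.
Qed.

Lemma dcut_sym (V : finType) (e : rel V) d (A B : {set V}) :
  is_dcut e d A B -> is_dcut e d B A.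
Proof.
move=> [[a [b [i u]]] [h1 h2]]; split; last by split.
by split=> //; split=> //; split; [rewrite setIC|rewrite setUC].
Qed.

Lemma mono_of (V : finType) (e : rel V) d (T : {set V}) :
  (forall A B a b, is_dcut e d A B -> a \in T -> b \in T -> a \in A -> b \in B -> False) ->
  monochromatic e d T.
Proof.
move=> H A B hc.
have hBC := @cutC _ _ _ hc.1.
case: (boolP (T \subset A)) => hTA; first by left.
right; apply/subsetP=> y yT.
move/subsetPn: hTA => [a aT aA].
rewrite hBC inE; apply/negP=> yA.
apply: (H A B y a hc yT aT yA); by rewrite hBC inE.
Qed.

Theorem lemma6 (V : finType) (e : rel V) (d : nat) :
  simple_graph e -> 1 <= d ->
  (forall C : {set V}, is_clique e C -> 2 * d + 1 <= #|C| -> monochromatic e d C) /\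
  (forall X Y : {set V}, monochromatic e d X -> monochromatic e d Y ->
     X :&: Y != set0 -> monochromatic e d (X :|: Y)) /\
  (forall (X : {set V}) (u : V), monochromatic e d X ->
     d < #|nbrs_in e u X| -> monochromatic e d (u |: X)) /\
  (forall T : {set V},
     2 * d < #|[set v in ~: T | T \subset nbhd e v]| -> monochromatic e d T).
Proof.
move=> [esym eirr] d1; split; [|split; [|split]].
- move=> C hC hcard; apply: mono_of => A B a b hc aC bC aA bB.
  have hBC := @cutC _ _ _ hc.1.
  apply: (@split_bad _ e d A B C a b hc _ aA bB).
  + by rewrite -addn1.
  + move=> y yC yB; apply: hC => //; apply/eqP=> ay; move: yB.
    by rewrite -ay hBC inE aA.
  + move=> y yC yA; apply: hC => //; apply/eqP=> ay; move: yA.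
    by rewrite -ay; move: bB; rewrite hBC inE => /negbTE ->.
- move=> X Y hX hY /set0Pn [x]; rewrite inE => /andP[xX xY] A B hc.
  have hBC := @cutC _ _ _ hc.1.
  case: (hX A B hc) => sX; case: (hY A B hc) => sY.
  + by left; rewrite subUset sX sY.
  + have := subsetP sX x xX; have := subsetP sY x xY.
    by rewrite hBC inE => /negP.
  + have := subsetP sX x xX; have := subsetP sY x xY.
    by rewrite hBC inE => ? /negP.
  + by right; rewrite subUset sX sY.
- move=> X u hX hu A B hc.
  have hBC := @cutC _ _ _ hc.1.
  have key : forall A' B', is_dcut e d A' B' -> X \subset A' -> u \in A'.
    move=> A' B' hc' sX; have hBC' := @cutC _ _ _ hc'.1.
    case uA: (u \in A') => //; exfalso.
    have uB : u \in B' by rewrite hBC' inE uA.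
    have := hc'.2.2 u uB.
    have : #|nbrs_in e u X| <= #|nbrs_in e u A'|.
      apply: subset_leq_card; apply/subsetP=> y; rewrite !inE => /andP[yX ->].
      by rewrite (subsetP sX y yX).
    lia.
  case: (hX A B hc) => sX.
  + by left; rewrite subUset sub1set (key A B hc sX) sX.
  + by right; rewrite subUset sub1set (key B A (@dcut_sym _ _ _ _ _ hc) sX) sX.
- move=> T hT; apply: mono_of => A B a b hc aT bT aA bB.
  apply: (@split_bad _ e d A B _ a b hc hT aA bB).
  + move=> y; rewrite !inE => /andP[_ /subsetP sT] _.
    by rewrite esym; have := sT a aT; rewrite inE.
  + move=> y; rewrite !inE => /andP[_ /subsetP sT] _.
    by rewrite esym; have := sT b bT; rewrite inE.
Qed.
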